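(* For all $d,N\in\mathbb{N}$, $B_{d,2}(1,\dots,1)=1$, where $(1,\dots,1)\in\mathbb{N}^N$.
   Context: $T_{d,2}=\mathbb{R}\oplus\mathbb{R}^d\oplus\mathbb{R}^{d\times d}$ with truncated tensor product; $\mathfrak{g}_{d,2}$ is the smallest Lie subalgebra (commutator bracket) containing $e_1,\dots,e_d$; $\exp(\mathbf{z})=1+\mathbf{z}+\mathbf{z}^{\otimes2}/2$; $\mathcal{G}_{d,2}=\exp(\mathfrak{g}_{d,2})$ (a group), $\log=\exp^{-1}$. For $\mathbf{x}\in\mathcal{G}_{d,2}^N$, $\mathsf{bary}(\mathbf{x})$ is the unique $\mathbf{m}\in\mathcal{G}_{d,2}$ with $\sum_{i=1}^N\log(\mathbf{m}^{-1}\mathbf{x}_i)=0$. For a path $X:[0,1]\to\mathbb{R}^d$ its $2$-truncated signature is $\sigma(X)=1\oplus(X(1)-X(0))\oplus\big(\int_{0<t_1<t_2<1}\dot X_{w_1}(t_1)\dot X_{w_2}(t_2)\,dt_1dt_2\big)_{w_1,w_2}$. $\mathcal{L}^{\mathrm{im}}_{d,\le 2,m}$ is the set of $\sigma(X)$ for piecewise linear $X$ with $m$ segments, and $B_{d,2}(\alpha)=\min\{m\in\mathbb{N}:\mathsf{bary}(\mathcal{L}^{\mathrm{im}}_{d,\le 2,\alpha_1}\times\dots\times\mathcal{L}^{\mathrm{im}}_{d,\le 2,\alpha_N})\subseteq\mathcal{L}^{\mathrm{im}}_{d,\le 2,m}\}$. *)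

(* Defs.v *)
From Stdlib Require Import Reals.
From Coquelicot Require Import Coquelicot.
From mathcomp Require Import ssreflect ssrfun ssrbool eqtype ssrnat seq fintype bigop.

Set Implicit Arguments.
Unset Strict Implicit.
Unset Printing Implicit Defensive.

Local Open Scope R_scope.

Record T (d : nat) := mkT {
  t0 : R;
  t1 : 'I_d -> R;
  t2 : 'I_d -> 'I_d -> R }.

Definition T_eq d (x y : T d) : Prop :=
  t0 x = t0 y /\ (forall i, t1 x i = t1 y i) /\ (forall i j, t2 x i j = t2 y i j).

Definition Tone d : T d := mkT 1 (fun _ => 0) (fun _ _ => 0).
Definition Tzero d : T d := mkT 0 (fun _ => 0) (fun _ _ => 0).
Definition Tadd d (x y : T d) : T d :=
  mkT (t0 x + t0 y) (fun i => t1 x i + t1 y i) (fun i j => t2 x i j + t2 y i j).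
Definition Tscale d (c : R) (x : T d) : T d :=
  mkT (c * t0 x) (fun i => c * t1 x i) (fun i j => c * t2 x i j).
Definition Topp d (x : T d) : T d := Tscale (-1) x.
(* truncated tensor product *)
Definition Tmul d (x y : T d) : T d :=
  mkT (t0 x * t0 y)
      (fun i => t0 x * t1 y i + t1 x i * t0 y)
      (fun i j => t0 x * t2 y i j + t1 x i * t1 y j + t2 x i j * t0 y).
Definition Te d (k : 'I_d) : T d :=
  mkT 0 (fun i => if i == k then 1 else 0) (fun _ _ => 0).
Definition Tbracket d (x y : T d) : T d := Tadd (Tmul x y) (Topp (Tmul y x)).

Definition Texp d (z : T d) : T d :=
  Tadd (Tadd (Tone d) z) (Tscale (/2) (Tmul z z)).

Definition lie_subalgebra d (S : T d -> Prop) : Prop :=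
  S (Tzero d) /\
  (forall x y, S x -> S y -> S (Tadd x y)) /\
  (forall c x, S x -> S (Tscale c x)) /\
  (forall x y, S x -> S y -> S (Tbracket x y)).

Definition in_g d (z : T d) : Prop :=
  forall S : T d -> Prop, lie_subalgebra S -> (forall k, S (Te k)) -> S z.

Definition in_G d (x : T d) : Prop := exists z, in_g z /\ T_eq (Texp z) x.

(* m is a barycenter of x : sum_i log(m^{-1} x_i) = 0, where
   z_i = log(m^{-1} x_i) is the element of g with exp(z_i) = m^{-1} x_i,
   i.e. m (x) exp(z_i) = x_i. *)
Definition is_bary d N (x : 'I_N -> T d) (m : T d) : Prop :=
  in_G m /\
  exists z : 'I_N -> T d,
    (forall i, in_g (z i) /\ T_eq (Tmul m (Texp (z i))) (x i)) /\
    T_eq (\big[@Tadd d/Tzero d]_(i < N) z i) (Tzero d).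

Definition piecewise_linear d (m : nat) (X : R -> 'I_d -> R) : Prop :=
  exists t : nat -> R,
    t 0%nat = 0 /\ t m = 1 /\ (forall k, (k < m)%nat -> t k < t k.+1) /\
    forall k, (k < m)%nat -> exists a b : 'I_d -> R,
      forall s, t k <= s <= t k.+1 -> forall w, X s w = a w + s * b w.

Definition sig2 d (X : R -> 'I_d -> R) : T d :=
  mkT 1 (fun w => X 1 w - X 0 w)
    (fun w1 w2 =>
       RInt (fun t2 =>
         RInt (fun t1 => Derive (fun s => X s w1) t1) 0 t2
         * Derive (fun s => X s w2) t2) 0 1).

Definition in_L d (m : nat) (x : T d) : Prop :=
  exists X, piecewise_linear m X /\ T_eq (sig2 X) x.

Definition bary_in_L d N (alpha : 'I_N -> nat) (m : nat) : Prop :=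
  forall x : 'I_N -> T d, (forall i, in_L (alpha i) (x i)) ->
    forall b, is_bary x b -> in_L m b.

Definition is_B d N (alpha : 'I_N -> nat) (b : nat) : Prop :=
  bary_in_L d alpha b /\ forall m, bary_in_L d alpha m -> (b <= m)%nat.

(* Main.v *)
Require Import Defs.
From Stdlib Require Import Reals Lra.
From Coquelicot Require Import Coquelicot.
From mathcomp Require Import ssreflect ssrfun ssrbool eqtype ssrnat seq fintype bigop.

Local Open Scope R_scope.

Lemma Derive_lin (X : R -> R) a c t : 0 < t < 1 ->
  (forall s, 0 <= s <= 1 -> X s = a + s * c) -> Derive X t = c.
Proof.
move=> ht hX.
have hpos : 0 < Rmin t (1 - t) by apply Rmin_pos; lra.
rewrite (@Derive_ext_loc X (fun s => a + s * c)).
  apply: is_derive_unique. auto_derive => //. ring.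
exists (mkposreal _ hpos) => s /= hs.
rewrite /ball /= /AbsRing_ball /abs /minus /plus /opp /= in hs.
apply: hX.
have h1 := Rmin_l t (1 - t). have h2 := Rmin_r t (1 - t).
change R in s; move: hs; rewrite /Rabs; case: Rcase_abs => h3 hs; lra.
Qed.

Lemma sig2_lin d (X : R -> 'I_d -> R) a bb :
  (forall s, 0 <= s <= 1 -> forall w, X s w = a w + s * bb w) ->
  T_eq (sig2 X) (mkT 1 bb (fun i j => bb i * bb j / 2)).
Proof.
move=> hX; split; [|split] => //=.
  move=> w; rewrite !hX; lra.
move=> i j.
rewrite (@RInt_ext _ _ (fun t => bb i * t * bb j)).
  apply: is_RInt_unique.
  have := @is_RInt_derive _ (fun t => bb i * bb j * (t * t) / 2) (fun t => bb i * t * bb j) 0 1.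
  rewrite /minus /plus /opp /=.
  have -> : bb i * bb j * (1 * 1) / 2 + - (bb i * bb j * (0 * 0) / 2) = bb i * bb j / 2 by field.
  apply.
    move=> x _; auto_derive => //; field.
  move=> x _; apply: continuous_mult; [apply: continuous_mult|]; 
   [apply: continuous_const|apply: continuous_id|apply: continuous_const].
move=> t; rewrite Rmin_left ?Rmax_right; try lra.
move=> ht.
rewrite (@Derive_lin (fun s => X s j) (a j) (bb j)) //; last by move=> s hs; apply hX.
rewrite (@RInt_ext _ _ (fun _ => bb i)).
  rewrite RInt_const /scal /= /mult /=; ring.
move=> x; rewrite Rmin_left ?Rmax_right; try lra.
move=> hx; apply: (@Derive_lin (fun s => X s i) (a i)); [lra|].
by move=> s hs; apply hX.
Qed.

Lemma in_g_t0 d (z : T d) : in_g z -> t0 z = 0.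
Proof.
move=> h; apply: (h (fun z => t0 z = 0)).
  rewrite /lie_subalgebra /=; split; [|split; [|split]] => //.
  - move=> x y /= -> ->; ring.
  - move=> c x /= ->; ring.
  - move=> x y /= -> ->; ring.
by [].
Qed.

Lemma iter_plus (c : R) n : iter n (Rplus c) 0 = INR n * c.
Proof. elim: n => [|n IH]; first by rewrite /=; ring. rewrite iterS IH S_INR; ring. Qed.

Lemma pl1_exists d (X : R -> 'I_d -> R) a bb :
  (forall s w, X s w = a w + s * bb w) -> piecewise_linear 1 X.
Proof.
move=> hX; exists INR; split; [|split; [|split]] => //=.
- move=> k; rewrite ltnS leqn0 => /eqP ->; simpl; lra.
- move=> k _; exists a, bb => s _ w; exact: hX.
Qed.

Lemma pl1_inv d (X : R -> 'I_d -> R) : piecewise_linear 1 X ->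
  exists a bb, forall s, 0 <= s <= 1 -> forall w, X s w = a w + s * bb w.
Proof.
case=> t [h0 [h1 [_ h]]].
case: (h 0%nat isT) => a [bb hab]; exists a, bb => s hs w; apply: hab.
by rewrite h0 h1.
Qed.

Lemma big_comp d N (phi : T d -> R) (F : 'I_N -> T d) :
  (forall x y, phi (Tadd x y) = phi x + phi y) -> phi (Tzero d) = 0 ->
  phi (\big[@Tadd d/Tzero d]_(i < N) F i) = \big[Rplus/0]_(i < N) phi (F i).
Proof. move=> hA h0; exact: (big_morph phi hA h0). Qed.

Theorem proposition7p1 (d N : nat) (hN : (1 <= N)%nat) :
  is_B d (fun _ : 'I_N => 1%nat) 1%nat.
Proof.
split.
- move=> x hx b [[y [hy hyb]] [z [hz hsum]]].
  have y0 := in_g_t0 _ _ hy.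
  have b0 : t0 b = 1.
    case: hyb => <- _; rewrite /= y0; ring.
  set B1 := t1 b.
  exists (fun s w => 0 + s * B1 w); split; first exact: (@pl1_exists _ _ (fun _ => 0) B1).
  have hs := @sig2_lin d (fun s w => 0 + s * B1 w) (fun _ => 0) B1 (fun _ _ _ => erefl).
  case: hs => [e0 [e1 e2]].
  split; [|split].
  + by rewrite e0 b0.
  + by move=> i; rewrite e1.
  move=> i j; rewrite e2 /=.
  pose c := t2 b i j - B1 i * B1 j / 2.
  pose phi := fun w : T d => t2 w i j + (B1 i * t1 w j - t1 w i * B1 j) / 2.
  have hk : forall k, phi (z k) = - c.
    move=> k; case: (hz k) => hzk [m0 [m1 m2]].
    have zk0 := in_g_t0 _ _ hzk.
    case: (hx k) => X [hpl hXe]; case: (pl1_inv _ _ hpl) => [a [bb hX]].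
    have [s0 [s1 s2]] := sig2_lin d X a bb hX.
    case: hXe => [x0 [x1 x2]].
    have Ei := m1 i; have Ej := m1 j; have E2 := m2 i j.
    rewrite -x1 s1 in Ei; rewrite -x1 s1 in Ej; rewrite -x2 s2 in E2.
    simpl in Ei, Ej, E2; rewrite b0 zk0 in Ei Ej E2.
    rewrite /phi /c -/B1; rewrite -/B1 in Ei Ej E2.
    rewrite -Ei -Ej in E2. nra.
  have hs0 : phi (\big[@Tadd d/Tzero d]_(i < N) z i) = 0.
    case: hsum => [_ [h1 h2]]; rewrite /phi !h1 h2 /=; field.
  have hA : forall u v, phi (Tadd u v) = phi u + phi v by move=> u v; rewrite /phi /=; field.
  have h0' : phi (Tzero d) = 0 by rewrite /phi /=; field.
  rewrite (big_comp d N phi z hA h0') in hs0.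
  rewrite (eq_bigr (fun _ => -c)) in hs0; last by move=> k _; apply hk.
  rewrite big_const_ord iter_plus in hs0.
  have hN' : 0 < INR N by apply lt_0_INR; apply/ltP.
  have hc : c = 0.
    case: (Rmult_integral _ _ hs0) => h; lra.
  rewrite /c in hc; lra.
- move=> m hm; case: m hm => [|m] hm //.
  exfalso.
  have hone : in_L 1 (Tone d).
    exists (fun s w => 0 + s * 0); split; first exact: (@pl1_exists _ _ (fun _ => 0) (fun _ => 0)).
    have [e0 [e1 e2]] := sig2_lin d (fun s w => 0 + s * 0) (fun _ => 0) (fun _ => 0) (fun _ _ _ => erefl).
    split; [|split].
    + by rewrite e0.
    + by move=> i; rewrite e1.
    + by move=> i j; rewrite e2 /=; field.
  have hg0 : in_g (Tzero d) by move=> S [h0 _] _.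
  have hexp : T_eq (Texp (Tzero d)) (Tone d).
    split; [|split] => /=; [field| move=> i; field| move=> i j; field].
  have hb : is_bary (fun _ : 'I_N => Tone d) (Tone d).
    split; first by exists (Tzero d).
    exists (fun _ => Tzero d); split.
      move=> i; split=> //; split; [|split] => /=; [field| move=> k; field| move=> k l; field].
    have P : forall n, T_eq (\big[@Tadd d/Tzero d]_(i < n) Tzero d) (Tzero d).
      move=> n; rewrite big_const_ord; elim: n => [|n [IH0 [IH1 IH2]]].
        by split; [|split].
      rewrite iterS; split; [|split] => /=; [rewrite IH0| move=> k; rewrite IH1| move=> k l; rewrite IH2] => /=; ring.
    exact: P.
  case: (hm _ (fun _ => hone) _ hb) => X [[t [h0 [h1 _]]] _].
  rewrite h0 in h1; lra.
Qed.
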